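(* For every $u\in R$ and every $v\in Z(R)$, one has $u^\eta v^\eta=(uv)^\eta$.
   Context: Let $f\in\mathbb{C}[H]$ be a polynomial. $R=R(f)$ is the associative $\mathbb{C}$-algebra generated by $E,F,H$ with relations $EF-FE=f(H)$, $HE-EH=E$, $HF-FH=-F$; the monomials $F^iH^jE^k$ form a basis of $R$. $Z(R)$ is the center of $R$. Let $R(E)=\mathbb{C}[E]$ and $R(F,H)$ the subalgebra generated by $F,H$. Fix an algebra homomorphism $\eta:R(E)\to\mathbb{C}$ with $\eta(E)\neq0$ and let $R_\eta(E)=\ker\eta$. Then $R=R(F,H)\oplus R\,R_\eta(E)$ as vector spaces; for $u\in R$, $u^\eta$ denotes its $R(F,H)$-component. *)

(* Defs.v *)
From HB Require Import structures.
From mathcomp Require Import all_boot all_order all_algebra.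
From mathcomp Require Import reals.
From mathcomp.real_closed Require Import complex.
Set Implicit Arguments. Unset Strict Implicit. Unset Printing Implicit Defensive.
Import Order.TTheory GRing.Theory Num.Theory.
Local Open Scope ring_scope.

(* The base field C is modelled as R[i] for a real field R : realType,
   i.e. the complex numbers. *)

Section RfDefs.
Variable K : fieldType.
Variable A : algType K.

Definition polyAt (f : {poly K}) (x : A) : A := horner_alg x f.

Definition Rf_relations (f : {poly K}) (E F H : A) : Prop :=
  [/\ E * F - F * E = polyAt f H,
      H * E - E * H = E &
      H * F - F * H = - F].

Definition pbw (E F H : A) (m : nat * nat * nat) : A :=
  F ^+ m.1.1 * H ^+ m.1.2 * E ^+ m.2.

Definition pbw_basis (E F H : A) : Prop :=
  (forall u : A, exists (s : seq (nat * nat * nat)) (c : nat * nat * nat -> K),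
      u = \sum_(m <- s) c m *: pbw E F H m) /\
  (forall (s : seq (nat * nat * nat)) (c : nat * nat * nat -> K),
      uniq s -> \sum_(m <- s) c m *: pbw E F H m = 0 ->
      forall m, m \in s -> c m = 0).

Definition central (v : A) : Prop := forall w : A, v * w = w * v.

Inductive inSubalg2 (F H : A) : A -> Prop :=
  | sa_F : inSubalg2 F H F
  | sa_H : inSubalg2 F H H
  | sa_1 : inSubalg2 F H 1
  | sa_add x y : inSubalg2 F H x -> inSubalg2 F H y -> inSubalg2 F H (x + y)
  | sa_scale (c : K) x : inSubalg2 F H x -> inSubalg2 F H (c *: x)
  | sa_mul x y : inSubalg2 F H x -> inSubalg2 F H y -> inSubalg2 F H (x * y).

Definition inPolyE (E : A) (x : A) : Prop := exists p : {poly K}, x = polyAt p E.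

(* eta : R(E) -> K is a (unital) K-algebra homomorphism; eta is given as a
   function on A, only its restriction to R(E) matters. *)
Definition alg_hom_on_RE (E : A) (eta : A -> K) : Prop :=
  [/\ eta 1 = 1,
      (forall x y, inPolyE E x -> inPolyE E y -> eta (x + y) = eta x + eta y),
      (forall x y, inPolyE E x -> inPolyE E y -> eta (x * y) = eta x * eta y) &
      (forall (c : K) x, inPolyE E x -> eta (c *: x) = c * eta x)].

Definition inKerEta (E : A) (eta : A -> K) (x : A) : Prop :=
  inPolyE E x /\ eta x = 0.

Inductive inRKer (E : A) (eta : A -> K) : A -> Prop :=
  | rk_0 : inRKer E eta 0
  | rk_mul r x : inKerEta E eta x -> inRKer E eta (r * x)
  | rk_add x y : inRKer E eta x -> inRKer E eta y -> inRKer E eta (x + y)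
  | rk_scale (c : K) x : inRKer E eta x -> inRKer E eta (c *: x).

(* w = u^eta : w is the R(F,H)-component of u in R = R(F,H) (+) R R_eta(E) *)
Definition eta_component (E F H : A) (eta : A -> K) (u w : A) : Prop :=
  inSubalg2 F H w /\ inRKer E eta (u - w).

End RfDefs.

(* Main.v *)
Require Import Defs.
From HB Require Import structures.
From mathcomp Require Import all_boot all_order all_algebra.
From mathcomp Require Import reals.
From mathcomp.real_closed Require Import complex.
Import GRing.Theory.
Local Open Scope ring_scope.
Set Implicit Arguments. Unset Strict Implicit.
Section Work.
Variable K : fieldType.
Variable A : algType K.
Variables E F H : A.

Notation trip := (nat * nat * nat)%type.

Definition lsum (l : seq (trip * K)) : A := \sum_(p <- l) p.2 *: pbw E F H p.1.
Definition cf (l : seq (trip * K)) (m : trip) : K := \sum_(p <- l | p.1 == m) p.2.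

Lemma collapse l (t : seq trip) : uniq t -> {subset map fst l <= t} ->
  lsum l = \sum_(x <- t) cf l x *: pbw E F H x.
Proof.
move=> ut sub.
under eq_bigr => x _ do rewrite /cf scaler_suml big_mkcond /=.
rewrite exchange_big /lsum big_seq [RHS]big_seq; apply: eq_bigr => p pl.
have pt : p.1 \in t by apply: sub; apply: map_f.
rewrite (big_rem p.1) //= eqxx big1_seq ?addr0 // => x /andP[_ xr].
case: eqP => // e; move: xr; rewrite -e mem_rem_uniqF //.
Qed.

Hypothesis hind : forall (s : seq trip) (c : trip -> K),
      uniq s -> \sum_(m <- s) c m *: pbw E F H m = 0 ->
      forall m, m \in s -> c m = 0.

Lemma cf_out l m : m \notin map fst l -> cf l m = 0.
Proof.
move=> h; rewrite /cf big1_seq // => p /andP[/eqP e pl].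
by move: h; rewrite -e map_f.
Qed.

Lemma rep_uniq l l' : lsum l = lsum l' -> forall m, cf l m = cf l' m.
Proof.
move=> e m.
set t := undup (map fst (l ++ l')).
have ut : uniq t by apply: undup_uniq.
have s1 : {subset map fst l <= t} by move=> x xl; rewrite mem_undup map_cat mem_cat xl.
have s2 : {subset map fst l' <= t} by move=> x xl; rewrite mem_undup map_cat mem_cat xl orbT.
have h0 : \sum_(x <- t) (cf l x - cf l' x) *: pbw E F H x = 0.
  under eq_bigr => x _ do rewrite scalerBl.
  by rewrite sumrB -collapse // -collapse // e subrr.
case mt : (m \in t).
  by apply/eqP; rewrite -subr_eq0; apply/eqP; exact: (hind ut h0 mt).
rewrite !cf_out //.
  by apply/negP => /s2; rewrite mt.
by apply/negP => /s1; rewrite mt.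
Qed.

Lemma cf_zero l : (forall m, cf l m = 0) -> lsum l = 0.
Proof.
move=> h; rewrite (@collapse l (undup (map fst l))) ?undup_uniq //.
  by rewrite big1 // => x _; rewrite h scale0r.
by move=> x; rewrite mem_undup.
Qed.


Definition sh (p : trip * K) : trip * K := ((p.1.1.1, p.1.1.2, p.1.2.+1), p.2).
Definition sc (c : K) (p : trip * K) : trip * K := (p.1, c * p.2).

Lemma lsum_cat l1 l2 : lsum (l1 ++ l2) = lsum l1 + lsum l2.
Proof. by rewrite /lsum big_cat. Qed.

Lemma lsum_sc c l : lsum (map (sc c) l) = c *: lsum l.
Proof.
rewrite /lsum big_map scaler_sumr; apply: eq_bigr => p _ /=.
by rewrite scalerA.
Qed.

Lemma lsum_sh l : lsum (map sh l) = lsum l * E.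
Proof.
rewrite /lsum big_map mulr_suml; apply: eq_bigr => p _ /=.
by rewrite -scalerAl /pbw /= exprSr !mulrA.
Qed.

Lemma cf_cat l1 l2 m : cf (l1 ++ l2) m = cf l1 m + cf l2 m.
Proof. by rewrite /cf big_cat. Qed.

Lemma cf_sc c l m : cf (map (sc c) l) m = c * cf l m.
Proof. by rewrite /cf big_map mulr_sumr. Qed.

Lemma cf_shS l i j k : cf (map sh l) (i, j, k.+1) = cf l (i, j, k).
Proof.
rewrite /cf big_map; apply: eq_bigl => -[[[a b] c] x] /=.
by rewrite !xpair_eqE eqSS.
Qed.

Lemma cf_sh0 l i j : cf (map sh l) (i, j, 0%N) = 0.
Proof.
rewrite /cf big_map big1 // => -[[[a b] c] x] /=.
by rewrite !xpair_eqE andbF.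
Qed.

Lemma key lw l a : a != 0 -> all (fun p : trip * K => p.1.2 == 0%N) lw ->
  lsum lw = lsum l * (E - a%:A) -> lsum lw = 0.
Proof.
move=> a0 hall e.
have e2 : lsum lw = lsum (map sh l ++ map (sc (- a)) l).
  by rewrite e lsum_cat lsum_sh lsum_sc mulrBr mulr_algr scaleNr.
have hc := rep_uniq e2.
have cS : forall m, cf lw m != 0 -> m.2 = 0%N.
  move=> m; apply: contraNeq => mk; rewrite /cf big1_seq // => p /andP[/eqP pm pl].
  by move: hall => /allP /(_ p pl) /eqP; rewrite pm => /eqP; rewrite (negbTE mk).
apply: cf_zero => -[[i j] k].
pose g k := cf l (i, j, k).
have rec : forall k, g k = a * g k.+1.
  move=> k'; have := hc (i, j, k'.+1).
  rewrite cf_cat cf_shS cf_sc.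
  have -> : cf lw (i, j, k'.+1) = 0.
    by apply/eqP; apply: contraT => /cS.
  by move/eqP; rewrite eq_sym addr_eq0 mulNr opprK => /eqP.
pose N := (\max_(p <- l) p.1.2).+1.
have gN : forall n, (N <= n)%N -> g n = 0.
  move=> n Nn; rewrite /g /cf big1_seq // => p /andP[/eqP pm pl].
  have := @leq_bigmax_seq _ l xpredT (fun p : trip * K => p.1.2) p pl isT.
  by rewrite pm /= => h; move: (leq_trans Nn h); rewrite ltnn.
have g0 : forall n, g 0%N = a ^+ n * g n.
  elim=> [|n IH]; first by rewrite mul1r.
  by rewrite IH rec mulrA -exprSr.
have gz : g 0%N = 0 by rewrite (g0 N) gN ?mulr0.
case: k => [|k].
  by rewrite hc cf_cat cf_sh0 cf_sc add0r -/(g 0%N) gz mulr0.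
by apply/eqP; apply: contraT => /cS.
Qed.

End Work.
Section Work2.
Variable K : fieldType.
Variable A : algType K.
Variables E F H : A.

Inductive fhs : A -> Prop :=
  | fz : fhs 0
  | fa x y : fhs x -> fhs y -> fhs (x + y)
  | fs (c : K) x : fhs x -> fhs (c *: x)
  | fg i j : fhs (F ^+ i * H ^+ j).

Lemma fhs_rep x : fhs x -> exists lw, all (fun p : (nat * nat * nat) * K => p.1.2 == 0%N) lw /\ x = lsum E F H lw.
Proof.
elim=> [|x1 y1 _ [l1 [h1 ->]] _ [l2 [h2 ->]]|c x1 _ [l1 [h1 ->]]|i j].
- by exists [::]; rewrite /lsum big_nil.
- by exists (l1 ++ l2); rewrite all_cat h1 h2 lsum_cat.
- exists (map (sc c) l1); rewrite lsum_sc; split=> //.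
  by rewrite all_map; apply: sub_all h1 => p.
- exists [:: ((i, j, 0%N), 1)]; rewrite /lsum big_seq1 scale1r /pbw /=.
  by rewrite expr0 mulr1.
Qed.

Lemma fhs_sub x y : fhs x -> fhs y -> fhs (x - y).
Proof. by move=> hx hy; rewrite -scaleN1r; apply: fa => //; apply: fs. Qed.

Lemma fhs_MH x : fhs x -> fhs (x * H).
Proof.
elim=> [|x1 y1 _ h1 _ h2|c x1 _ h1|i j].
- by rewrite mul0r; apply: fz.
- by rewrite mulrDl; apply: fa.
- by rewrite -scalerAl; apply: fs.
- by rewrite -mulrA -exprSr; apply: fg.
Qed.

Lemma fhs_MHk x (k : nat) : fhs x -> fhs (x * (H - k%:R)).
Proof.
move=> hx; rewrite mulrBr mulr_natr -scaler_nat.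
by apply: fhs_sub; [apply: fhs_MH | apply: fs].
Qed.

Hypothesis hHF : H * F - F * H = - F.

Lemma comm1 k : H * F ^+ k = F ^+ k * (H - k%:R).
Proof.
elim: k => [|k IH]; first by rewrite expr0 mul1r mulr1 subr0.
have hf : H * F = F * H - F by rewrite -hHF addrC subrK.
rewrite exprSr mulrA IH -mulrA mulrBl hf -(commr_nat F k) -mulrA.
congr (_ * _).
by rewrite mulrBr -addrA -opprD mulrS mulrDr mulr1.
Qed.

Lemma comm2 j k : H ^+ j * F ^+ k = F ^+ k * (H - k%:R) ^+ j.
Proof.
elim: j => [|j IH]; first by rewrite !expr0 mul1r mulr1.
by rewrite exprSr -mulrA comm1 mulrA IH -mulrA -exprSr.
Qed.

Lemma fhs_gen i j k l : fhs (F ^+ i * H ^+ j * (F ^+ k * H ^+ l)).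
Proof.
rewrite mulrA -(mulrA _ (H ^+ j)) comm2 mulrA -exprD.
have h1 : forall n, fhs (F ^+ (i + k) * (H - k%:R) ^+ n).
  elim=> [|n IH]; first by rewrite expr0 -(expr0 H); apply: fg.
  by rewrite exprSr mulrA; apply: fhs_MHk.
elim: l => [|l IH]; first by rewrite expr0 mulr1.
by rewrite exprSr mulrA; apply: fhs_MH.
Qed.

Lemma fhs_mul x y : fhs x -> fhs y -> fhs (x * y).
Proof.
move=> hx hy; elim: hx => [|x1 y1 _ h1 _ h2|c x1 _ h1|i j].
- by rewrite mul0r; apply: fz.
- by rewrite mulrDl; apply: fa.
- by rewrite -scalerAl; apply: fs.
elim: hy => [|x1 y1 _ h1 _ h2|c x1 _ h1|k l].
- by rewrite mulr0; apply: fz.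
- by rewrite mulrDr; apply: fa.
- by rewrite -scalerAr; apply: fs.
exact: fhs_gen.
Qed.

Lemma sub_fhs w : inSubalg2 F H w -> fhs w.
Proof.
elim=> {w}.
- by have := fg 1 0; rewrite expr0 mulr1 expr1.
- by have := fg 0 1; rewrite expr0 mul1r expr1.
- by have := fg 0 0; rewrite !expr0 mulr1.
- by move=> x y _ h1 _ h2; apply: fa.
- by move=> c x _ h; apply: fs.
- by move=> x y _ h1 _ h2; apply: fhs_mul.
Qed.

End Work2.
Section Work3.
Variable K : fieldType.
Variable A : algType K.
Variables E : A.
Variable eta : A -> K.
Hypothesis heta : alg_hom_on_RE E eta.

Lemma eta_poly p : eta (polyAt p E) = p.[eta E].
Proof.
case: heta => h1 hD hM hZ.
have pE : forall q, inPolyE E (polyAt q E) by move=> q; exists q.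
have e1 : polyAt 1 E = 1 by rewrite /polyAt rmorph1.
elim/poly_ind: p => [|p c IH].
  rewrite horner0 /polyAt rmorph0 -(scale0r (1 : A)) -e1 hZ //.
  by rewrite mul0r.
have -> : polyAt (p * 'X + c%:P) E = polyAt p E * polyAt 'X E + c *: polyAt 1 E.
  by rewrite /polyAt rmorphD rmorphM /= horner_algC rmorph1.
rewrite hD; last 2 first.
- by rewrite /polyAt -rmorphM; apply: pE.
- exists c%:P; rewrite e1 /polyAt horner_algC //.
rewrite hM // hZ // e1 h1 IH /polyAt horner_algX.
by rewrite !hornerE.
Qed.

Lemma ker_fact x : inKerEta E eta x -> exists q, x = q * (E - (eta E)%:A).
Proof.
case=> [[p ->]]; rewrite eta_poly => /eqP/factor_theorem [q ->].
exists (polyAt q E); rewrite /polyAt rmorphM rmorphB /= horner_algX horner_algC //.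
Qed.

Lemma rker x : inRKer E eta x -> exists r, x = r * (E - (eta E)%:A).
Proof.
elim=> {x}.
- by exists 0; rewrite mul0r.
- by move=> r x /ker_fact [q ->]; exists (r * q); rewrite mulrA.
- by move=> x y _ [r1 ->] _ [r2 ->]; exists (r1 + r2); rewrite mulrDl.
- by move=> c x _ [r ->]; exists (c *: r); rewrite scalerAl.
Qed.

End Work3.

Theorem mainTheorem16 (R : realType) (A : algType R[i]) (f : {poly R[i]})
  (E F H : A) (eta : A -> R[i])
  (hrel : Rf_relations f E F H) (hbasis : pbw_basis E F H)
  (heta : alg_hom_on_RE E eta) (hetaE : eta E != 0)
  (u v ue ve uve : A) (hv : central v)
  (hue : eta_component E F H eta u ue)
  (hve : eta_component E F H eta v ve)
  (huve : eta_component E F H eta (u * v) uve) :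
  ue * ve = uve.
Proof.
case: hrel => _ _ hHF.
case: hbasis => hspan hind.
case: hue => sue /(rker heta) [r1 e1].
case: hve => sve /(rker heta) [r2 e2].
case: huve => suve /(rker heta) [r3 e3].
set a := eta E in e1 e2 e3.
set w := uve - ue * ve.
have sw : inSubalg2 F H w.
  rewrite /w -scaleN1r; apply: sa_add => //; apply: sa_scale; exact: sa_mul.
have ew : w = (r1 * v + ue * r2 - r3) * (E - a%:A).
  have -> : w = (u - ue) * v + ue * (v - ve) - (u * v - uve).
    rewrite /w mulrBl mulrBr; rewrite !addrA; rewrite !opprB.
    by rewrite (subrK (ue * v)) [RHS]addrC [RHS]addrA (subrK (u * v)).
  rewrite e1 e2 e3 -(mulrA r1) -(hv (E - a%:A)) (mulrA r1) (mulrA ue).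
  by rewrite -mulrDl -mulrBl.
have [lw [hall elw]] := fhs_rep E (sub_fhs hHF sw).
have [s [c er]] := hspan (r1 * v + ue * r2 - r3).
have er' : r1 * v + ue * r2 - r3 = lsum E F H (map (fun m => (m, c m)) s).
  by rewrite er /lsum big_map.
have : lsum E F H lw = 0.
  by apply: (key hind hetaE hall); rewrite -elw ew er'.
rewrite -elw /w => /eqP; rewrite subr_eq0 => /eqP.
by move=> ->.
Qed.
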